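(* Let $n\ge 2$ and let $b\ge 0$ be an integer, with $b'=\lfloor b/2\rfloor$. Let $P(b)$ be the number of $n$-tuples $(x_1,\dots,x_n)$ of non-negative integers with $x_1+x_2+\cdots+x_{n-1}+2x_n=b$. Then $$P(b)=\sum_{k=0}^{\lfloor (n-1)/2\rfloor}\binom{n-1}{2k}\, C(b'-k+1;\,n-1)\quad\text{if } b \text{ is even},$$ $$P(b)=\sum_{k=0}^{\lfloor (n-2)/2\rfloor}\binom{n-1}{2k+1}\, C(b'-k+1;\,n-1)\quad\text{if } b \text{ is odd}.$$
   Context: For an integer $m$, $C(m;n-1)=\frac{1}{(n-1)!}\,m(m+1)\cdots(m+n-2)$ if $m>0$, and $C(m;n-1)=0$ otherwise. $\binom{n-1}{j}$ denotes the usual binomial coefficient. *)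

(* Defs.v *)
From mathcomp Require Import all_boot all_algebra.
Set Implicit Arguments. Unset Strict Implicit. Unset Printing Implicit Defensive.

(* C(m; n-1) = m(m+1)...(m+n-2)/(n-1)! for integer m > 0, and 0 otherwise.
   Here [r] plays the role of n-1. *)
Definition Cpoch (m : int) (r : nat) : nat :=
  match m with
  | Posz (S _ as k) => (\prod_(i < r) (k + i)) %/ r`!
  | _ => 0
  end.

(* P(b): number of n-tuples of non-negative integers (x_0,...,x_{n-1}) with
   x_0 + ... + x_{n-2} + 2 x_{n-1} = b.  Each x_i <= b, so tuples are
   taken in 'I_b.+1 without loss. *)
Definition Pcount (n b : nat) : nat :=
  #|[set x : {ffun 'I_n -> 'I_b.+1} |
     \sum_(i < n) (if val i == n.-1 then 2 else 1) * val (x i) == b]|.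

(* Main.v *)
From mathcomp Require Import all_boot all_algebra zify.
Set Implicit Arguments. Unset Strict Implicit. Unset Printing Implicit Defensive.

Definition hh (r m s : nat) : nat :=
  if s <= m then (~~ odd (m - s)) * 'C((m - s)./2 + r, r) else 0.
Definition FF (r m : nat) : nat := \sum_(0 <= s < m.+1) 'C(r, s) * hh r m s.

Lemma pascal_sum (r N : nat) (H : nat -> nat) :
  \sum_(0 <= s < N.+1) 'C(r.+1, s) * H s =
  \sum_(0 <= s < N.+1) 'C(r, s) * H s + \sum_(0 <= s < N) 'C(r, s) * H s.+1.
Proof.
rewrite !big_nat_recl // !bin0 -addnA; congr (_ + _).
rewrite -big_split /=; apply: eq_bigr => s _; by rewrite binS mulnDl.
Qed.

Lemma hh_i r m s : hh r.+1 m.+1 s = hh r m.+1 s + hh r.+1 m s.+1.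
Proof.
rewrite /hh; case: (ltngtP s m) => Hs.
- have -> : m.+1 - s = (m - s.+1).+2 by lia.
  have -> : s <= m.+1 by lia. rewrite /=.
  rewrite negbK; set a := (m - s.+1)./2.
  case: (odd _); rewrite ?mul0n ?mul1n // addSn binS addSnnS addnC //.
- case: (leqP s m.+1) => H2; last by [].
  have -> : s = m.+1 by lia.
  by rewrite subnn /= !add0n !binn.
- subst s; by rewrite leqnSn subSn // subnn.
Qed.

Lemma hh_ii r m s : hh r m.+1 s.+1 = hh r m s.
Proof. by rewrite /hh subSS ltnS. Qed.

Lemma FF_rec r m : FF r.+1 m.+1 = FF r m.+1 + FF r.+1 m.
Proof.
rewrite /FF pascal_sum.
rewrite (eq_bigr (fun s => 'C(r, s) * hh r m.+1 s + 'C(r, s) * hh r.+1 m s.+1));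
  last by move=> s _; rewrite hh_i mulnDr.
rewrite big_split /= -!addnA; congr (_ + _).
rewrite (eq_bigr (fun s => 'C(r, s) * hh r.+1 m s) (P := xpredT) (r := index_iota 0 m.+1)); last by move=> s _; rewrite hh_ii.
rewrite pascal_sum addnC; congr (_ + _).
rewrite !big_nat_recr //= /hh ltnn. have -> : (m.+2 <= m) = false by lia. by rewrite !muln0 !addn0.
Qed.

Lemma FF0m m : FF 0 m = ~~ odd m.
Proof.
rewrite /FF big_nat_recl // big1_seq; last first.
  by move=> s /andP[_ _]; rewrite bin0n.
by rewrite bin0 /hh subn0 /= bin0 muln1 mul1n addn0.
Qed.

Lemma FFr0 r : FF r 0 = 1.
Proof. by rewrite /FF big_nat1 /hh /= bin0 add0n binn. Qed.

Lemma FF_sum r m : FF r.+1 m = \sum_(j < m.+1) FF r (m - j).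
Proof.
elim: m => [|m IH]; first by rewrite big_ord1 !FFr0.
rewrite FF_rec big_ord_recl subn0; congr (_ + _).
rewrite IH; apply: eq_bigr => j _; by rewrite /bump /= subSS.
Qed.

Require Import Defs.
Import GRing.Theory Num.Theory.
Local Open Scope ring_scope.

Definition S1 (b : nat) : {poly int} := \sum_(j < b.+1) 'X^(1 * j).
Definition S2 (b : nat) : {poly int} := \sum_(j < b.+1) 'X^(2 * j).

Lemma sum_ind (b j : nat) : (j <= b)%N ->
  \sum_(i < b.+1) ((j == i)%:R : int) = 1.
Proof.
move=> hj; rewrite (bigD1 (Ordinal (hj : (j < b.+1)%N))) //= eqxx big1 ?addr0 //.
move=> i /eqP Hi; case: eqP => // E; exfalso; apply: Hi; apply: val_inj => /=; by rewrite E.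
Qed.

Lemma S1coef b j : (j <= b)%N -> (S1 b)`_j = 1.
Proof.
move=> hj; rewrite /S1 coef_sum; rewrite -(sum_ind hj); apply: eq_bigr => i _.
by rewrite coefXn mul1n.
Qed.

Lemma S2coef b m : (m <= b)%N -> (S2 b)`_m = (~~ odd m)%:R.
Proof.
move=> hm; rewrite /S2 coef_sum.
case: (boolP (odd m)) => Hodd /=.
  rewrite big1 // => i _; rewrite coefXn; case: eqP => // E.
  by move: Hodd; rewrite E oddM.
have hh : (m./2 <= b)%N by lia.
rewrite -(sum_ind hh); apply: eq_bigr => i _; rewrite coefXn.
have Hm : m = (2 * m./2)%N.
  by have := odd_double_half m; rewrite (negbTE Hodd) add0n -mul2n => E; rewrite E.
by rewrite {1}Hm eqn_pmul2l.
Qed.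

Lemma Ucoef b r m : (m <= b)%N -> ((S1 b) ^+ r * S2 b)`_m = (FF r m)%:R.
Proof.
elim: r m => [|r IH] m hm; first by rewrite expr0 mul1r S2coef // FF0m.
rewrite exprS -mulrA coefM FF_sum natr_sum; apply: eq_bigr => j _.
rewrite S1coef ?mul1r ?IH //; [lia | have := ltn_ord j; lia].
Qed.

Lemma Pcount_poly n b : ((Pcount n b)%:R : int) =
  (\prod_(i < n) \sum_(j < b.+1) 'X^((if val i == n.-1 then 2 else 1) * val j)
     : {poly int})`_b.
Proof.
rewrite bigA_distr_bigA /= coef_sum /Pcount -sum1_card big_mkcond natr_sum /=.
apply: eq_bigr => f _; rewrite prodrXr coefXn inE eq_sym.
by case: eqP.
Qed.

Lemma Pcount_FF r b : Pcount r.+1 b = FF r b.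
Proof.
apply/eqP; rewrite -(@eqr_nat int) Pcount_poly big_ord_recr /=.
rewrite (eq_bigr (fun _ => S1 b)); last first.
  by move=> i _; rewrite /S1 /= ltn_eqF.
rewrite prodr_const card_ord eqxx -/(S2 b) Ucoef //.
Qed.

Local Close Scope ring_scope.

Lemma half_bound r : r <= (r./2).*2 + 1 /\ (r./2).*2 <= r.
Proof. have := odd_double_half r; case: (odd r) => /= E; lia. Qed.

Lemma prod_rise j r : \prod_(i < r) (j.+1 + i) = 'C(j + r, r) * r`!.
Proof.
elim: r => [|r IH]; first by rewrite big_ord0 bin0.
rewrite big_ord_recr /= IH factS.
have := mul_bin_diag (j + r).+1 r; rewrite /= -addnS => E.
have -> : j.+1 + r = (j + r).+1 by rewrite addSn.
nia.
Qed.

Lemma Cpoch_eq c k r :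
  Cpoch (c%:Z - k%:Z + 1)%R r = if k <= c then 'C(c - k + r, r) else 0.
Proof.
case: leqP => H.
  have -> : (c%:Z - k%:Z + 1)%R = Posz (c - k).+1 by lia.
  by rewrite /Cpoch prod_rise mulnK // fact_gt0.
have : (c%:Z - k%:Z + 1 <= 0)%R by lia.
case: (c%:Z - k%:Z + 1)%R => [[|m]|m] //.
Qed.

Lemma widen_sum (f : nat -> nat) N M : N <= M -> (forall s, N <= s -> f s = 0) ->
  \sum_(0 <= s < N) f s = \sum_(0 <= s < M) f s.
Proof.
move=> NM Hf; rewrite (big_nat_widen _ _ _ _ _ NM) big_mkcondr /=.
apply: eq_bigr => s _; case: ltnP => // H; by rewrite Hf.
Qed.

Lemma split_eo (f : nat -> nat) K :
  \sum_(0 <= s < K.*2) f s = \sum_(0 <= k < K) (f (2 * k) + f (2 * k).+1).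
Proof.
elim: K => [|K IH]; first by rewrite !big_geq.
rewrite doubleS !big_nat_recr //= IH addnA mul2n; lia.
Qed.

Lemma hh_e r c k : hh r (c.*2) (2 * k) = if k <= c then 'C(c - k + r, r) else 0.
Proof.
rewrite /hh mul2n leq_double; case: ifP => // _.
by rewrite -doubleB odd_double doubleK mul1n.
Qed.

Lemma hh_e' r c k : hh r (c.*2) (2 * k).+1 = 0.
Proof.
rewrite /hh; case: ifP => // H; by rewrite oddB // odd_double /= mul2n odd_double.
Qed.

Lemma hh_o r c k : hh r (c.*2).+1 (2 * k).+1 = if k <= c then 'C(c - k + r, r) else 0.
Proof.
rewrite /hh ltnS mul2n leq_double subSS; case: ifP => // _.
by rewrite -doubleB odd_double doubleK mul1n.
Qed.

Lemma hh_o' r c k : hh r (c.*2).+1 (2 * k) = 0.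
Proof.
rewrite /hh; case: ifP => // H; by rewrite oddB // /= odd_double mul2n odd_double.
Qed.

Theorem mainTheorem4 (n b : nat) (hn : 2 <= n) :
  let b' := b./2 in
  (~~ odd b -> Pcount n b =
     \sum_(0 <= k < (n - 1)./2 + 1)
        'C(n - 1, 2 * k) * Cpoch (b'%:Z - k%:Z + 1)%R (n - 1)) /\
  (odd b -> Pcount n b =
     \sum_(0 <= k < (n - 2)./2 + 1)
        'C(n - 1, 2 * k + 1) * Cpoch (b'%:Z - k%:Z + 1)%R (n - 1)).
Proof.
move=> b'; rewrite {}/b'.
have [r Er] : exists r, n = r.+1 by exists n.-1; lia.
subst n; rewrite subSS !subn0 Pcount_FF.
have [H1 H2] := half_bound r.
have [H3 H4] := half_bound (r - 1).
split => Hb.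
- have Eb : b = (b./2).*2.
    by have := odd_double_half b; rewrite (negbTE Hb).
  move: Eb; generalize (b./2) => c ->; clear Hb.
  rewrite /FF (@widen_sum (fun s => 'C(r, s) * hh r c.*2 s) c.*2.+1 (r + c.*2 + 1).*2);
    [| lia | by move=> s Hs; rewrite /hh leqNgt Hs muln0].
  rewrite (@widen_sum _ (r./2 + 1) (r + c.*2 + 1)); [| lia |]; last first.
    by move=> k Hk; rewrite bin_small ?mul0n //; lia.
  rewrite split_eo; apply: eq_bigr => k _.
  by rewrite hh_e hh_e' muln0 addn0 Cpoch_eq.
- have Eb : b = (b./2).*2.+1.
    by have := odd_double_half b; rewrite Hb add1n.
  move: Eb; generalize (b./2) => c ->; clear Hb.
  rewrite /FF (@widen_sum (fun s => 'C(r, s) * hh r c.*2.+1 s) c.*2.+2 (r + c.*2 + 1).*2);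
    [| lia | by move=> s Hs; rewrite /hh leqNgt Hs muln0].
  rewrite (@widen_sum _ ((r - 1)./2 + 1) (r + c.*2 + 1)); [| lia |]; last first.
    by move=> k Hk; rewrite bin_small ?mul0n //; lia.
  rewrite split_eo; apply: eq_bigr => k _.
  by rewrite hh_o hh_o' muln0 add0n addn1 Cpoch_eq.
Qed.
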